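(* Assume $f^*$ is additive. Suppose $\pi_g,\pi_p>0$, and suppose the proposal contains a trivial move (returning the current state) that is selected with some probability $\pi_0>0$. Suppose $p_{\mathrm{TSE}}$ has full support, and let $m,\sigma^2,\lambda$ be arbitrary. If $r\ge\mathrm{diam}(\Omega_{\mathrm{TSE},m})$, then for any tolerance $\varepsilon>0$, the lazification of the Markov chain induced by BART+ with $r$-step proposals and temperature $T=1$ has $\varepsilon$-mixing time satisfying $$t_{\mathrm{mix}}(\varepsilon)=O_{\mathbb P}(1).$$
   Context: Data: $\mathcal X=\{1,\dots,B\}^d$; $\nu$ a full-support probability measure on $\mathcal X$; $\epsilon$ a (centered) sub-Gaussian random variable; training data are $n$ i.i.d. pairs $(\mathbf x_i,y_i)$, $\mathbf x_i\sim\nu$, $y_i=f^*(\mathbf x_i)+\epsilon_i$, noise independent of covariates; $\mathbb P_n$ is probability over the data. $f^*$ is additive if $f^*(\mathbf x)=f_1(x_1)+\cdots+f_{m'}(x_{m'})$ for some $2\le m'\le d$ and univariate $f_i$. Trees: a tree structure is a finite rooted binary tree with axis-aligned splitting rules at internal nodes (children $\{x_v\le t\}$, $\{x_v>t\}$ of the parent's cell, both nonempty). $\Omega_{\mathrm{TSE},m}$ is the finite set of TSEs $\mathfrak E=(\mathfrak T_1,\dots,\mathfrak T_m)$. Bayesian model: given $\mathfrak E$ with $b$ leaves, $\boldsymbol\Psi$ is the $n\times b$ leaf-indicator matrix over training points, $\boldsymbol\mu\sim N(0,(\sigma^2/\lambda)\mathbf I_b)$, $\mathbf y=\boldsymbol\Psi\boldsymbol\mu+\mathbf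 e$, $\mathbf e\sim N(0,\sigma^2\mathbf I_n)$; prior $p=p_{\mathrm{TSE}}$; marginal likelihood $p(\mathbf y\mid\mathfrak E)$; posterior $p(\mathfrak E\mid\mathbf y)\propto p(\mathbf y\mid\mathfrak E)p(\mathfrak E)$. Proposal: on tree structures, with probabilities $\pi_g,\pi_p,\pi_c,\pi_s$ (and here also a trivial move with probability $\pi_0$) propose grow (split a leaf), prune (collapse two sibling leaves), change (change an internal node's rule), or swap (swap rules of a parent–child pair of internal nodes, or if both children share a rule, swap parent's rule with both children's), choices uniform, empty leaves disallowed. On ensembles, $Q(\mathfrak E,\mathfrak E')$ is the probability of proposing $\mathfrak E'$ from $\mathfrak E$ by choosing a tree index uniformly at random and applying the tree proposal to that tree. $Q^r(\mathfrak E,\mathfrak E')=\sum_{\mathfrak E_1,\dots,\mathfrak E_{r-1}}Q(\mathfrak E,\mathfrak E_1)\prod_{i=2}^{r-1}Q(\mathfrak E_{i-1},\mathfrak E_i)Q(\mathfrak E_{r-1},\mathfrak E')$ is the $r$-step proposal. $\mathrm{diam}(\Omega_{\mathrm{TSE},m})$ is the diameter of the graph on $\Omega_{\mathrm{TSE},m}$ with an edge between $\mathfrak E,\mathfrak E'$ when $Q(\mathfrak E,\mathfrak E')>0$. BART+ with $r$ steps and temperature $T$: Markov chain on $\Omega_{\mathrm{TSE},m}$ with transition matrix $P$ that proposes $\mathfrak E'\sim Q^r(\mathfrak E,\cdot)$ and accepts with probability $\min\big\{\frac{Q^r(\mathfrak E',\mathfrak E)p(\mathfrak E')}{Q^r(\mathfrak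 E,\mathfrak E')p(\mathfrak E)}\big(\frac{p(\mathbf y\mid\mathfrak E')}{p(\mathbf y\mid\mathfrak E)}\big)^{1/T},1\big\}$. Its lazification has transition matrix $\tilde P=(P+I)/2$; with stationary distribution $\pi$, $t_{\mathrm{mix}}(\varepsilon)=\min\{t\ge0:\max_x\|\tilde P^t(x,\cdot)-\pi\|_{\mathrm{TV}}\le\varepsilon\}$. $a_n=O_{\mathbb P}(b_n)$: for every $0<\delta<1$ there are $N,C>0$ with $\sup_{n>N}\mathbb P_n\{|a_n/b_n|>C\}<\delta$. *)

(* Defs.v *)
From HB Require Import structures.
From mathcomp Require Import all_boot all_order all_algebra.
From mathcomp Require Import all_classical all_reals all_analysis.
Set Implicit Arguments. Unset Strict Implicit. Unset Printing Implicit Defensive.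
Import Order.TTheory GRing.Theory Num.Theory.
Local Open Scope ring_scope.

Section Trees.
Variables (d B : nat).

(* X = {1,...,B}^d, coordinate values encoded as 0,...,B-1. *)
Definition covpt : finType := {ffun 'I_d -> 'I_B}.

Definition rule : finType := ('I_d * 'I_B)%type.

(* A tree structure is encoded in heap layout: node k (k >= 1) has children
   2k (left, x_v <= t) and 2k+1 (right, x_v > t); the root is node 1.
   The label of a node is Some rule if it is an internal node, None otherwise.
   Depths up to d*B are available, which suffices since a tree with
   nonempty cells over X has depth at most d*(B-1). *)
Definition depth_bound : nat := (d * B)%N.
Definition npos : nat := (2 ^ depth_bound.+1)%N.
Definition pos : finType := 'I_npos.
Definition tree : finType := {ffun pos -> option rule}.

Definition lab (T : tree) (k : nat) : option rule :=
  oapp T None (insub k : option pos).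

Definition internal (T : tree) (k : nat) : bool := lab T k != None.

Definition present (T : tree) (k : nat) : bool :=
  (k == 1)%N || ((1 < k)%N && internal T k./2).

Definition is_leaf (T : tree) (k : nat) : bool := present T k && ~~ internal T k.

Definition wf_tree (T : tree) : bool :=
  (lab T 0 == None) &&
  [forall i : pos, internal T i ==> present T i && (i.*2.+1 < npos)%N].

Definition rule_side (o : option rule) (x : covpt) (right : bool) : bool :=
  match o with
  | Some (v, t) => if right then (nat_of_ord t < nat_of_ord (x v))%N
                   else (nat_of_ord (x v) <= nat_of_ord t)%N
  | None => true
  end.

(* cell of node k: intersection of the half-spaces along the root-to-k path *)
Definition cell (T : tree) (k : nat) (x : covpt) : bool :=
  [forall j : 'I_depth_bound.+1,
     let a := (k %/ 2 ^ j.+1)%N in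
     (0 < a)%N ==> rule_side (lab T a) x (odd (k %/ 2 ^ j))].

(* a tree structure: well formed, every node has a nonempty cell
   (equivalently, both children of every internal node are nonempty) *)
Definition valid_tree (T : tree) : bool :=
  wf_tree T && [forall i : pos, present T i ==> [exists x, cell T i x]].

Definition upd (T : tree) (i : pos) (o : option rule) : tree :=
  [ffun j => if j == i then o else T j].

Variable R : realType.

(* choose a ∈ A uniformly, then move according to K a;
   if no choice is available, the proposal returns the current tree *)
Definition unifK (I : finType) (T : tree) (A : {set I}) (K : I -> tree -> R)
  (T' : tree) : R :=
  if #|A| == 0%N then (T' == T)%:R
  else #|A|%:R^-1 * \sum_(a in A) K a T'.

Definition grow_rules (T : tree) (i : pos) : {set rule} :=
  [set rho : rule | valid_tree (upd T i (Some rho))].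
Definition grow_nodes (T : tree) : {set pos} :=
  [set i : pos | is_leaf T i && (#|grow_rules T i| != 0%N)].
Definition growQ (T T' : tree) : R :=
  unifK T (grow_nodes T)
    (fun i => unifK T (grow_rules T i) (fun rho T'' => (upd T i (Some rho) == T'')%:R)) T'.

Definition prune_nodes (T : tree) : {set pos} :=
  [set i : pos | [&& internal T i, ~~ internal T i.*2 & ~~ internal T i.*2.+1]].
Definition pruneQ (T T' : tree) : R :=
  unifK T (prune_nodes T) (fun i T'' => (upd T i None == T'')%:R) T'.

Definition change_rules (T : tree) (i : pos) : {set rule} :=
  [set rho : rule | (Some rho != T i) && valid_tree (upd T i (Some rho))].
Definition change_nodes (T : tree) : {set pos} :=
  [set i : pos | internal T i && (#|change_rules T i| != 0%N)].
Definition changeQ (T T' : tree) : R :=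
  unifK T (change_nodes T)
    (fun i => unifK T (change_rules T i) (fun rho T'' => (upd T i (Some rho) == T'')%:R)) T'.

(* swap: k = 0 (swap with left child), 1 (with right child),
   2 (both children share a rule: swap parent's rule with both children's) *)
Definition swapres (T : tree) (i : pos) (k : 'I_3) : tree :=
  let l := (i.*2)%N in let r := (i.*2.+1)%N in
  [ffun j : pos =>
     match nat_of_ord k with
     | 0 => if nat_of_ord j == nat_of_ord i then lab T l
            else if nat_of_ord j == l then T i else T j
     | 1 => if nat_of_ord j == nat_of_ord i then lab T r
            else if nat_of_ord j == r then T i else T j
     | _ => if nat_of_ord j == nat_of_ord i then lab T l
            else if (nat_of_ord j == l) || (nat_of_ord j == r) then T i else T j
     end].
Definition swap_ok (T : tree) (i : pos) (k : 'I_3) : bool :=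
  let l := (i.*2)%N in let r := (i.*2.+1)%N in
  let same := [&& internal T l, internal T r & lab T l == lab T r] in
  [&& internal T i, valid_tree (swapres T i k) &
     match nat_of_ord k with
     | 0 => internal T l && ~~ same
     | 1 => internal T r && ~~ same
     | _ => same
     end].
Definition swap_opts (T : tree) : {set pos * 'I_3} :=
  [set p : pos * 'I_3 | swap_ok T p.1 p.2].
Definition swapQ (T T' : tree) : R :=
  unifK T (swap_opts T) (fun p T'' => (swapres T p.1 p.2 == T'')%:R) T'.

Definition treeQ (pi0 pig pip pic pis : R) (T T' : tree) : R :=
  pi0 * (T' == T)%:R + pig * growQ T T' + pip * pruneQ T T'
  + pic * changeQ T T' + pis * swapQ T T'.

Definition ens (m : nat) : finType := {ffun 'I_m -> tree}.

Definition OmegaTSE (m : nat) : {set ens m} :=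
  [set E : ens m | [forall j, valid_tree (E j)]].

Definition ensQ (m : nat) (pi0 pig pip pic pis : R) (E E' : ens m) : R :=
  m%:R^-1 * \sum_(j < m)
    treeQ pi0 pig pip pic pis (E j) (E' j) *
    [forall k : 'I_m, (k != j) ==> (E k == E' k)]%:R.

Definition PsiPsiT (m n : nat) (E : ens m) (xd : 'I_n -> covpt) : 'M[R]_n :=
  \matrix_(i, i') \sum_(j < m) \sum_(l : pos | is_leaf (E j) l)
     (cell (E j) l (xd i) && cell (E j) l (xd i'))%:R.

(* y ~ N(0, sigma2 I_n + (sigma2/lambda) Psi Psi^T), obtained by integrating
   mu ~ N(0, (sigma2/lambda) I_b) out of y = Psi mu + e, e ~ N(0, sigma2 I_n) *)
Definition marg_cov (m n : nat) (sigma2 lambda : R) (E : ens m)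
  (xd : 'I_n -> covpt) : 'M[R]_n :=
  sigma2 *: 1%:M + (sigma2 / lambda) *: PsiPsiT E xd.

Definition marglik (m n : nat) (sigma2 lambda : R) (E : ens m)
  (xd : 'I_n -> covpt) (yd : 'I_n -> R) : R :=
  let S := marg_cov sigma2 lambda E xd in
  let y : 'cV[R]_n := \col_i yd i in
  (Num.sqrt (2 * pi)) ^- n * (Num.sqrt (\det S))^-1 *
  expR (- ((y^T *m invmx S *m y) 0 0) / 2).

End Trees.

Section Chains.
Variables (R : realType) (S : finType) (Om : {set S}).

Definition kcomp (K L : S -> S -> R) : S -> S -> R :=
  fun x z => \sum_(y in Om) K x y * L y z.

Definition kid : S -> S -> R := fun x y => (x == y)%:R.

Definition kpow (K : S -> S -> R) (t : nat) : S -> S -> R := iter t (kcomp K) kid.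

Definition kedge (K : S -> S -> R) (x y : S) : Prop := 0 < K x y \/ 0 < K y x.

Fixpoint kwalk (K : S -> S -> R) (k : nat) (x y : S) : Prop :=
  match k with
  | 0 => x = y
  | k'.+1 => exists z, z \in Om /\ kedge K x z /\ kwalk K k' z y
  end.

Definition diam_le (K : S -> S -> R) (r : nat) : Prop :=
  forall x y, x \in Om -> y \in Om -> exists2 k, (k <= r)%N & kwalk K k x y.

Definition tv (p q : S -> R) : R := 2^-1 * \sum_(y in Om) `|p y - q y|.

(* t_mix(eps) <= C  (t_mix = min {t | max_x ||K^t(x,.) - pi||_TV <= eps}) *)
Definition tmix_le (K : S -> S -> R) (pi : S -> R) (eps C : R) : Prop :=
  exists t : nat, t%:R <= C /\ forall x, x \in Om -> tv (kpow K t x) pi <= eps.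

Definition mh_accept (Qr : S -> S -> R) (p L : S -> R) (T : R) (x y : S) : R :=
  Order.min 1 ((Qr y x * p y) / (Qr x y * p x) * powR (L y / L x) T^-1).

Definition mh_kernel (Qr : S -> S -> R) (p L : S -> R) (T : R) (x y : S) : R :=
  if x == y then
    Qr x x + \sum_(z in Om | z != x) Qr x z * (1 - mh_accept Qr p L T x z)
  else Qr x y * mh_accept Qr p L T x y.

Definition lazify (K : S -> S -> R) : S -> S -> R :=
  fun x y => (K x y + (x == y)%:R) / 2.

Definition posterior (p L : S -> R) : S -> R :=
  fun x => L x * p x / \sum_(z in Om) L z * p z.

End Chains.

Section BARTplus.
Variables (R : realType) (d B m : nat).
Variables (pi0 pig pip pic pis sigma2 lambda T : R) (prior : ens d B m -> R) (r : nat).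

Definition Qr_ens : ens d B m -> ens d B m -> R :=
  kpow (OmegaTSE d B m) (ensQ pi0 pig pip pic pis) r.

Definition bartplus_lazy (n : nat) (xd : 'I_n -> covpt d B) (yd : 'I_n -> R) :=
  lazify (mh_kernel (OmegaTSE d B m) Qr_ens prior
            (fun E => marglik sigma2 lambda E xd yd) T).

Definition bartplus_posterior (n : nat) (xd : 'I_n -> covpt d B) (yd : 'I_n -> R) :=
  posterior (OmegaTSE d B m) prior (fun E => marglik sigma2 lambda E xd yd).

End BARTplus.

Local Open Scope classical_set_scope.

Definition is_additive (R : realType) (d B : nat) (f : covpt d B -> R) : Prop :=
  exists (m' : nat) (fs : nat -> 'I_B -> R),
    (2 <= m' <= d)%N /\ forall x, f x = \sum_(i < d | (i < m')%N) fs i (x i).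

Definition full_support_prob (R : realType) (X : finType) (nu : X -> R) : Prop :=
  (forall x, 0 < nu x) /\ \sum_x nu x = 1.

Definition centered_subgaussian (R : realType) (mu : probability R R) : Prop :=
  mu.-integrable setT EFin /\ (\int[mu]_x (x%:E) = 0)%E /\
  exists s : R, 0 < s /\ forall t : R,
    (\int[mu]_x (expR (t * x))%:E <= (expR (s ^+ 2 * t ^+ 2 / 2))%:E)%E.

(* (x_i, eps_i), i = 0,1,2,..., are i.i.d. with x_i ~ nu, eps_i ~ mu independent:
   the joint law of the first n pairs is the n-fold product of nu (x) mu *)
Definition iid_design_noise (R : realType) (d B : nat) (dW : measure_display)
  (W : measurableType dW) (P : probability W R) (nu : covpt d B -> R)
  (mu : probability R R) (xs : nat -> W -> covpt d B) (es : nat -> W -> R) : Prop :=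
  (forall i a, measurable [set w | xs i w = a]) /\
  (forall i, measurable_fun setT (es i)) /\
  forall (n : nat) (A : nat -> {set covpt d B}) (Bs : nat -> set R),
    (forall i, measurable (Bs i)) ->
    P (\bigcap_(i < n) ([set w | xs i w \in A i] `&` (es i @^-1` Bs i))) =
    (\prod_(i < n) ((\sum_(x in A i) nu x)%:E * mu (Bs i)))%E.

(* Main.v *)
Require Import Defs.
From HB Require Import structures.
From mathcomp Require Import all_boot all_order all_algebra.
From mathcomp Require Import all_classical all_reals all_analysis.
From mathcomp Require Import ring lra zify.
Set Implicit Arguments. Unset Strict Implicit. Unset Printing Implicit Defensive.
Import Order.TTheory GRing.Theory Num.Theory.
Local Open Scope ring_scope.

Section ChainLemmas.
Variables (R : realType) (S : finType) (Om : {set S}).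

Lemma kpowS (K : S -> S -> R) t x z :
  kpow Om K t.+1 x z = \sum_(y in Om) K x y * kpow Om K t y z.
Proof. by []. Qed.

Lemma kpow0 (K : S -> S -> R) x z : kpow Om K 0 x z = (x == z)%:R.
Proof. by []. Qed.

Lemma kpow_stat (K : S -> S -> R) (pi : S -> R) :
  (forall y, y \in Om -> \sum_(x in Om) pi x * K x y = pi y) ->
  forall t z, z \in Om -> \sum_(y in Om) pi y * kpow Om K t y z = pi z.
Proof.
move=> st; elim=> [|t IH] z zO.
  rewrite (bigD1 z) //= big1 ?addr0; first by rewrite /kid eqxx mulr1.
  by move=> y /andP[_ yz]; rewrite /kid (negbTE yz) mulr0.
under eq_bigr do rewrite kpowS big_distrr /=.
rewrite exchange_big /= -[RHS]IH //; apply: eq_bigr => w wO.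
by under eq_bigr do rewrite mulrA; rewrite -big_distrl /= st.
Qed.

Lemma doeblin (K : S -> S -> R) (pi : S -> R) (beta : R) :
  (forall x y, x \in Om -> y \in Om -> 0 <= K x y - beta * pi y) ->
  (forall x, x \in Om -> \sum_(y in Om) K x y = 1) ->
  (forall y, y \in Om -> \sum_(x in Om) pi x * K x y = pi y) ->
  (forall y, y \in Om -> 0 <= pi y) ->
  \sum_(y in Om) pi y = 1 ->
  forall t x, x \in Om ->
    \sum_(z in Om) `|kpow Om K t x z - pi z| <= 2 * (1 - beta) ^+ t.
Proof.
move=> Kb Ks st pi0 pis; elim=> [|t IH] x xO.
  rewrite expr0 mulr1.
  apply: le_trans (ler_sum _ (fun z _ => ler_normB _ _)) _.
  rewrite big_split /= (bigD1 x) //= big1 ?addr0.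
    rewrite /kid eqxx normr1 (eq_bigr _ (fun z zO => ger0_norm (pi0 z zO))) pis.
    by rewrite lerD // ?addrC // ?le_refl //; lra.
  by move=> y /andP[_ yz]; rewrite /kid eq_sym (negbTE yz) normr0.
have step : forall z, z \in Om -> kpow Om K t.+1 x z - pi z =
   \sum_(y in Om) (K x y - beta * pi y) * (kpow Om K t y z - pi z).
  move=> z zO.
  have e1 : \sum_(y in Om) K x y * pi z = pi z by rewrite -big_distrl /= Ks // mul1r.
  have e2 : \sum_(y in Om) beta * pi y * kpow Om K t y z = beta * pi z.
    by under eq_bigr do rewrite -mulrA; rewrite -big_distrr /= kpow_stat.
  have e3 : \sum_(y in Om) beta * pi y * pi z = beta * pi z.
    by rewrite -big_distrl -big_distrr /= pis mulr1.
  under eq_bigr do rewrite mulrBl !mulrBr.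
  rewrite !sumrB e1 e2 e3 kpowS; lra.
under eq_bigr => z zO do rewrite step //.
apply: le_trans (ler_sum _ (fun z _ => ler_norm_sum _ _ _)) _.
rewrite exchange_big /=.
under eq_bigr => y yO.
  under eq_bigr => z zO do rewrite normrM (ger0_norm (Kb x y xO yO)).
  rewrite -big_distrr /=.
  over.
apply: le_trans (ler_sum _ (fun y yO => ler_wpM2l (Kb x y xO yO) (IH y yO))) _.
rewrite -big_distrl /= sumrB Ks // -big_distrr /= pis mulr1.
by rewrite exprS mulrCA.
Qed.

End ChainLemmas.

Section MH.
Variables (R : realType) (S : finType) (Om : {set S}).
Variables (Q : S -> S -> R) (p L : S -> R) (q : R).
Hypothesis Q0 : forall x y, x \in Om -> y \in Om -> 0 <= Q x y.
Hypothesis Qs : forall x, x \in Om -> \sum_(y in Om) Q x y = 1.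
Hypothesis Qq : forall x y, x \in Om -> y \in Om -> q <= Q x y.
Hypothesis q0 : 0 < q.
Hypothesis p0 : forall x, x \in Om -> 0 < p x.
Hypothesis L0 : forall x, x \in Om -> 0 < L x.

Let w x := L x * p x.
Let K := mh_kernel Om Q p L 1.
Let Z := \sum_(z in Om) w z.
Let pi := posterior Om p L.

Lemma w0 x : x \in Om -> 0 < w x.
Proof. by move=> xO; rewrite /w mulr_gt0 ?L0 ?p0. Qed.

Lemma acc_eq x y : x \in Om -> y \in Om ->
  mh_accept Q p L 1 x y = Order.min 1 ((Q y x * w y) / (Q x y * w x)).
Proof.
move=> xO yO; rewrite /mh_accept invr1 powRr1; last first.
  by rewrite divr_ge0 // ltW ?L0.
by rewrite mulf_div /w; congr (Order.min 1 (_ / _)); ring.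
Qed.

Lemma acc_le1 x y : mh_accept Q p L 1 x y <= 1.
Proof. by rewrite /mh_accept ge_min lexx. Qed.

Lemma K_off x y : x \in Om -> y \in Om -> x != y ->
  K x y * w x = Order.min (Q x y * w x) (Q y x * w y).
Proof.
move=> xO yO xy; rewrite /K /mh_kernel (negbTE xy) acc_eq //.
have wx := w0 xO.
rewrite -mulrA [_ * w x]mulrC mulrA -[X in X * _]mulrC.
have [Qxy0|Qxy0] := eqVneq (Q x y) 0.
  rewrite Qxy0 mul0r mulr0 invr0 mulr0 mul0r.
  have := Q0 yO xO; have := w0 yO => wy Qyx.
  by apply/esym/min_idPl; rewrite mulr_ge0 // ltW.
have Qp : 0 < Q x y * w x by rewrite mulr_gt0 // lt0r Qxy0 Q0.
rewrite [w x * _]mulrC minr_pMr ?(ltW Qp) // mulr1 [_ * (_ / _)]mulrC divfK //.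
by rewrite gt_eqF.
Qed.

Lemma K_ge0 x y : x \in Om -> y \in Om -> 0 <= K x y.
Proof.
move=> xO yO; have [<-|xy] := eqVneq x y.
  rewrite /K /mh_kernel eqxx addr_ge0 ?Q0 // sumr_ge0 // => z /andP[zO _].
  by rewrite mulr_ge0 ?Q0 // subr_ge0 acc_le1.
rewrite /K /mh_kernel (negbTE xy) mulr_ge0 ?Q0 // le_min ler01 /= mulr_ge0 ?powR_ge0 //.
by rewrite divr_ge0 // mulr_ge0 ?Q0 // ltW ?p0.
Qed.

Lemma K_sum x : x \in Om -> \sum_(y in Om) K x y = 1.
Proof.
move=> xO; apply: eq_trans (Qs xO); rewrite (bigD1 x) //= {1}/K /mh_kernel eqxx [RHS](bigD1 x) //=.
rewrite -addrA; congr (_ + _); rewrite -big_split /=; apply: eq_bigr.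
move=> y /andP[_ yx]; rewrite /K /mh_kernel eq_sym (negbTE yx); ring.
Qed.

Lemma Z0 x : x \in Om -> 0 < Z.
Proof.
move=> xO; rewrite /Z (bigD1 x) //= ltr_pwDl ?w0 // sumr_ge0 // => z /andP[zO _].
by rewrite ltW // w0.
Qed.

Lemma wleZ x : x \in Om -> w x <= Z.
Proof.
move=> xO; rewrite /Z (bigD1 x) //= lerDl sumr_ge0 // => z /andP[zO _].
by rewrite ltW // w0.
Qed.

Lemma pi_ge0 x : x \in Om -> 0 <= pi x.
Proof. by move=> xO; rewrite /pi /posterior divr_ge0 // ltW ?(Z0 xO) // w0. Qed.

Lemma pi_sum x : x \in Om -> \sum_(y in Om) pi y = 1.
Proof.
move=> xO; rewrite /pi /posterior -big_distrl /= divff //.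
by rewrite gt_eqF // (Z0 xO).
Qed.

Lemma K_db x y : x \in Om -> y \in Om -> w x * K x y = w y * K y x.
Proof.
move=> xO yO; have [<-//|xy] := eqVneq x y.
by rewrite [w x * _]mulrC [w y * _]mulrC K_off // K_off 1?eq_sym // minC.
Qed.

Lemma K_stat y : y \in Om -> \sum_(x in Om) pi x * K x y = pi y.
Proof.
move=> yO; rewrite /pi /posterior.
under eq_bigr => x xO do rewrite mulrAC -/(w x) K_db //.
by rewrite -big_distrl /= -big_distrr /= K_sum // mulr1.
Qed.

Lemma K_lb x y : x \in Om -> y \in Om -> q * pi y <= K x y.
Proof.
move=> xO yO; have [<-|xy] := eqVneq x y.
  rewrite /K /mh_kernel eqxx; apply: le_trans (_ : Q x x <= _).
    apply: le_trans (Qq xO xO); rewrite ler_piMr ?(ltW q0) //.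
    rewrite /pi /posterior ler_pdivrMr ?(Z0 xO) // mul1r; exact: wleZ.
  rewrite lerDl sumr_ge0 // => z /andP[zO _].
  by rewrite mulr_ge0 ?Q0 // subr_ge0 acc_le1.
have wx := w0 xO; have wy := w0 yO; have Zp := Z0 xO.
rewrite -(ler_pM2r wx) K_off // le_min; apply/andP; split.
  rewrite ler_pM2r // (le_trans _ (Qq xO yO)) // ler_piMr ?(ltW q0) //.
  by rewrite /pi /posterior ler_pdivrMr // mul1r wleZ.
have -> : q * pi y * w x = q * w y * (w x / Z) by rewrite /pi /posterior /w; ring.
apply: le_trans (_ : q * w y <= _).
  have h1 : 0 <= q * w y by apply: mulr_ge0; [exact: ltW|exact: ltW wy].
  have h2 : w x / Z <= 1 by rewrite ler_pdivrMr // mul1r wleZ.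
  by rewrite ler_piMr.
by rewrite ler_pM2r // Qq.
Qed.

Let Kl := lazify K.

Lemma sum_kid (a : S) : a \in Om -> \sum_(b in Om) ((a == b)%:R : R) = 1.
Proof.
move=> aO; rewrite (bigD1 a) //= eqxx big1 ?addr0 // => b /andP[_ ba].
by rewrite eq_sym (negbTE ba).
Qed.


Lemma Kl_tv t x : x \in Om -> tv Om (kpow Om Kl t x) pi <= (1 - q / 2) ^+ t.
Proof.
move=> xO.
have H := @doeblin R S Om Kl pi (q / 2).
rewrite /tv; apply: le_trans (ler_wpM2l _ (H _ _ _ _ _ t x xO)) _.
- by rewrite invr_ge0.
- move=> a b aO bO; rewrite /Kl /lazify subr_ge0 mulrAC ler_pM2r //.
  apply: le_trans (K_lb aO bO) _; rewrite lerDl; by case: (a == b).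
- move=> a aO; rewrite /Kl /lazify -big_distrl /= big_split /= K_sum //.
  rewrite sum_kid //; lra.
- move=> b bO; rewrite /Kl /lazify.
  under eq_bigr do rewrite mulrA mulrDr.
  rewrite -big_distrl /= big_split /= K_stat // (bigD1 b) //= eqxx big1 ?addr0.
    rewrite /= mulr1. lra.
  by move=> a /andP[_ /negbTE->]; rewrite mulr0.
- exact: pi_ge0.
- exact: pi_sum xO.
by rewrite mulrA mulVf ?mul1r.
Qed.
End MH.


Section TreeFacts.
Variables (d B : nat).
Local Notation tree := (tree d B).
Local Notation pos := (pos d B).
Local Notation npos := (npos d B).

Lemma lab_pos (T : tree) (p : pos) : lab T p = T p.
Proof. by rewrite /lab valK. Qed.

Lemma lab_ge (T : tree) k : (npos <= k)%N -> lab T k = None.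
Proof. by move=> h; rewrite /lab insubF // ltnNge h. Qed.

Lemma lab_ffun (F : nat -> option (rule d B)) k :
  lab [ffun j : pos => F (nat_of_ord j)] k = if (k < npos)%N then F k else None.
Proof.
case: ltnP => h; last exact: lab_ge.
by rewrite (_ : k = nat_of_ord (Ordinal h)) // lab_pos ffunE.
Qed.

Lemma tree_ext (T1 T2 : tree) : (forall k, (k < npos)%N -> lab T1 k = lab T2 k) -> T1 = T2.
Proof.
move=> h; apply/ffunP => p; rewrite -!lab_pos; exact: h.
Qed.

Lemma lab_upd (T : tree) (i : pos) o k :
  lab (upd T i o) k = if k == nat_of_ord i then o else lab T k.
Proof.
case: (ltnP k npos) => h; last first.
  rewrite !lab_ge //; case: eqP => // ki; move: h; rewrite ki leqNgt ltn_ord //.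
rewrite (_ : k = nat_of_ord (Ordinal h)) // lab_pos ffunE -lab_pos.
by [].
Qed.

Lemma internal_lt (T : tree) k : internal T k -> (k < npos)%N.
Proof. by rewrite /internal; case: ltnP => // h; rewrite lab_ge. Qed.

Lemma valid_wf (T : tree) k : valid_tree T -> internal T k ->
  present T k && (k.*2.+1 < npos)%N.
Proof.
case/andP=> /andP[_ /forallP H] _ Hk.
have kn := internal_lt Hk.
by have := implyP (H (Ordinal kn)); apply.
Qed.

Lemma valid_lab0 (T : tree) : valid_tree T -> lab T 0 = None.
Proof. by case/andP=> /andP[/eqP] . Qed.

Lemma internal_gt0 (T : tree) k : valid_tree T -> internal T k -> (0 < k)%N.
Proof.
move=> v; case: k => // ; by rewrite /internal valid_lab0.
Qed.

Lemma present_lt (T : tree) k : valid_tree T -> present T k -> (k < npos)%N.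
Proof.
move=> v /orP[/eqP->|/andP[_ h]].
  by rewrite /npos (leq_trans _ (leq_pexp2l _ (ltn0Sn _))) ?expn1.
have := valid_wf v h; case/andP=> _ h2.
have := odd_double_half k; case: (odd k) => /= e; lia.
Qed.

Lemma valid_cell (T : tree) k : valid_tree T -> present T k -> exists x, cell T k x.
Proof.
move=> v h; have kn := present_lt v h.
case/andP: v => _ /forallP H.
by have := implyP (H (Ordinal kn)) h => /existsP.
Qed.

Lemma cell_mono (T T' : tree) k x :
  (forall a, lab T' a = lab T a \/ lab T' a = None) -> cell T k x -> cell T' k x.
Proof.
move=> h /forallP H; apply/forallP => j; apply/implyP => a0.
have := implyP (H j) a0; case: (h (k %/ 2 ^ j.+1)%N) => -> //.
Qed.


Lemma internal_upd (T : tree) (i : pos) o k :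
  internal (upd T i o) k = if k == nat_of_ord i then o != None else internal T k.
Proof. by rewrite /internal lab_upd; case: ifP. Qed.

Lemma prune_valid (T : tree) i : valid_tree T -> i \in prune_nodes T ->
  valid_tree (upd T i None).
Proof.
move=> v; rewrite inE => /and3P[hi hl hr].
have i0 := internal_gt0 v hi.
have intT' k : internal (upd T i None) k = (k != i) && internal T k.
  by rewrite internal_upd; case: eqP => // ->; rewrite eqxx.
have presT' k : present (upd T i None) k -> present T k.
  rewrite /present intT'; case/orP => [->//|/andP[-> /andP[_ ->]]].
  by rewrite orbT.
apply/andP; split; [apply/andP; split|].
- by rewrite lab_upd; case: ifP => _ //; rewrite valid_lab0.
- apply/forallP => p; apply/implyP; rewrite intT' => /andP[pi hp].
  have /andP[pr ->] := valid_wf v hp; rewrite andbT.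
  move: pr; rewrite /present intT'; case/orP => [->//|/andP[p1 hh]].
  rewrite p1 hh andbT /=; apply/orP; right.
  apply/eqP => e; have := odd_double_half p; rewrite e.
  by case: (odd p) => /= E; [move: hp; rewrite -E add1n (negbTE hr)
                            |move: hp; rewrite -E add0n (negbTE hl)].
- apply/forallP => p; apply/implyP => /presT' hp.
  have [x hx] := valid_cell v hp; apply/existsP; exists x.
  apply: cell_mono hx => a; rewrite lab_upd; case: eqP; by [right|left].
Qed.

Lemma grow_back (T : tree) i rho : valid_tree T -> i \in grow_nodes T ->
  rho \in grow_rules T i ->
  i \in prune_nodes (upd T i (Some rho)) /\ upd (upd T i (Some rho)) i None = T.
Proof.
move=> v; rewrite inE => /andP[/andP[pri nii] _] _.
have i0 : (0 < i)%N by move: pri; rewrite /present; case/orP => [/eqP->|/andP[h _]] //; lia.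
split.
  rewrite inE !internal_upd eqxx /=.
  have -> : (i.*2 == i) = false by apply/negbTE; lia.
  have -> : (i.*2.+1 == i) = false by apply/negbTE; lia.
  apply/andP; split; apply/negP => h; have /andP[h1 _] := valid_wf v h;
    move: h1; rewrite /present.
    have -> : (i.*2)./2 = i by lia.
    by rewrite (negbTE nii) andbF orbF; lia.
  have -> : (i.*2.+1)./2 = i by lia.
  by rewrite (negbTE nii) andbF orbF; lia.
apply: tree_ext => k _; rewrite !lab_upd; case: eqP => // ->.
by move: nii; rewrite /internal negbK => /eqP.
Qed.

Lemma prune_back (T : tree) i : valid_tree T -> i \in prune_nodes T ->
  exists rho, [/\ i \in grow_nodes (upd T i None),
    rho \in grow_rules (upd T i None) i & upd (upd T i None) i (Some rho) = T].
Proof.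
move=> v ip; have := ip; rewrite inE => /and3P[hi hl hr].
have i0 := internal_gt0 v hi.
have [rho Erho] : exists rho, T i = Some rho.
  by move: hi; rewrite /internal lab_pos; case: (T i) => // r; exists r.
have E : upd (upd T i None) i (Some rho) = T.
  apply: tree_ext => k _; rewrite !lab_upd; case: eqP => // ->.
  by rewrite lab_pos Erho.
have rg : rho \in grow_rules (upd T i None) i by rewrite inE E.
exists rho; split => //.
rewrite inE; apply/andP; split; last first.
  by rewrite -lt0n card_gt0; apply/set0Pn; exists rho.
rewrite /is_leaf internal_upd eqxx /= andbT.
have /andP[pr _] := valid_wf v hi.
move: pr; rewrite /present internal_upd.
have -> : (i./2 == i) = false by apply/negbTE; lia.
by [].
Qed.

Lemma change_back (T : tree) i rho : valid_tree T -> i \in change_nodes T ->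
  rho \in change_rules T i ->
  exists a, [/\ i \in change_nodes (upd T i (Some rho)),
    a \in change_rules (upd T i (Some rho)) i &
    upd (upd T i (Some rho)) i (Some a) = T].
Proof.
move=> v; rewrite inE => /andP[hi _]; rewrite inE => /andP[nr _].
have [a Ea] : exists a, T i = Some a.
  by move: hi; rewrite /internal lab_pos; case: (T i) => // r; exists r.
have E : upd (upd T i (Some rho)) i (Some a) = T.
  apply: tree_ext => k _; rewrite !lab_upd; case: eqP => // ->.
  by rewrite lab_pos Ea.
have ac : a \in change_rules (upd T i (Some rho)) i.
  by rewrite inE E v andbT ffunE eqxx -Ea eq_sym.
exists a; split => //.
rewrite inE internal_upd eqxx /=.
by rewrite -lt0n card_gt0; apply/set0Pn; exists a.
Qed.

Lemma db_gt0 (T : tree) c : valid_tree T -> internal T c -> (1 < c)%N ->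
  (0 < depth_bound d B)%N.
Proof.
move=> v hc c1; have /andP[_ lt] := valid_wf v hc; move: lt.
rewrite /npos; case: (depth_bound d B) => // ; rewrite expn1; lia.
Qed.

Lemma child_neq (T : tree) i c : valid_tree T -> internal T i -> internal T c ->
  c = i.*2 \/ c = i.*2.+1 -> lab T c != lab T i.
Proof.
move=> v hi hc ec; apply/eqP => e.
have i0 := internal_gt0 v hi.
have c1 : (1 < c)%N by case: ec => ->; lia.
have db0 := db_gt0 v hc c1.
have [[vv t] Ei] : exists r, lab T i = Some r.
  by move: hi; rewrite /internal; case: (lab T i) => // r; exists r.
pose g := if odd c then c.*2 else c.*2.+1.
have pg : present T g.
  rewrite /present; apply/orP; right.
  have -> : g./2 = c by rewrite /g; case: (odd c); lia.
  by rewrite hc andbT /g; case: (odd c); lia.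
have [x /forallP hx] := valid_cell v pg.
have := implyP (hx ord0); have := implyP (hx (Ordinal (db0 : 1 < (depth_bound d B).+1)%N)).
rewrite /= !expnS expn0 !muln1 !divn1.
have -> : (g %/ (2 * 2) = i)%N by rewrite /g; case: ec => ->; rewrite /= ?odd_double /= ?odd_double /=; lia.
have -> : (g %/ 2 = c)%N by rewrite /g; case: (odd c); lia.
rewrite e Ei i0 (leq_trans _ c1) //= => h1 h2.
have := h1 isT; have := h2 isT.
case: ec => Ec; rewrite /g Ec.
- rewrite odd_double /= odd_double /= => h3 h4; lia.
- rewrite /= ?odd_double /= ?odd_double /= => h3 h4; lia.
Qed.

Definition swapG (T : tree) (i k x : nat) : option (rule d B) :=
  match k with
  | 0 => if x == i then lab T i.*2 else if x == i.*2 then lab T i else lab T x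
  | 1 => if x == i then lab T i.*2.+1 else if x == i.*2.+1 then lab T i else lab T x
  | _ => if x == i then lab T i.*2
         else if (x == i.*2) || (x == i.*2.+1) then lab T i else lab T x
  end.

Lemma lab_swapres (T : tree) (i : pos) (k : 'I_3) x : (x < npos)%N ->
  lab (swapres T i k) x = swapG T i k x.
Proof.
move=> h; rewrite (_ : x = nat_of_ord (Ordinal h)) // lab_pos ffunE.
by rewrite /swapG -!lab_pos.
Qed.

Lemma swap_back (T : tree) (i : pos) (k : 'I_3) : valid_tree T ->
  (i, k) \in swap_opts T ->
  (i, k) \in swap_opts (swapres T i k) /\ swapres (swapres T i k) i k = T.
Proof.
move=> v; rewrite inE /swap_ok /= => /and3P[hi _ hk].
have i0 := internal_gt0 v hi.
have /andP[_ rlt] := valid_wf v hi.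
have ilt : (i < npos)%N by lia.
have llt : (i.*2 < npos)%N by lia.
have e1 : (i.*2 == i) = false by apply/negbTE; lia.
have e2 : (i.*2.+1 == i) = false by apply/negbTE; lia.
have e3 : (i.*2.+1 == i.*2) = false by apply/negbTE; lia.
set T' := swapres T i k.
have L x : (x < npos)%N -> lab T' x = swapG T i k x by move=> h; rewrite lab_swapres.
have back : swapres T' i k = T.
  apply: tree_ext => x xn; rewrite lab_swapres // /swapG.
  rewrite !L // /swapG; move: hk; case: k {T' L} => [[|[|[|kk]]] hk3] //= hk;
    rewrite ?eqxx ?e1 ?e2 ?e3 //=.
  - case: (eqVneq x i) => [->|/negbTE xi]; first by rewrite ?eqxx.
    rewrite ?xi; case: (eqVneq x i.*2) => [->|/negbTE xl]; first by rewrite ?eqxx.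
    by rewrite ?xl.
  - case: (eqVneq x i) => [->|/negbTE xi]; first by rewrite ?eqxx.
    rewrite ?xi; case: (eqVneq x i.*2.+1) => [->|/negbTE xl]; first by rewrite ?eqxx.
    by rewrite ?xl.
  - case/and3P: hk => _ _ /eqP elr.
    case: (eqVneq x i) => [->|/negbTE xi]; first by [].
    case: (eqVneq x i.*2) => [->|/negbTE xl] /=; first by [].
    by case: (eqVneq x i.*2.+1) => [->|/negbTE xr] /=.
split => //.
rewrite inE /swap_ok /= back v /=.
move: hk; rewrite /internal !L // /swapG.
have hi' : lab T i != None := hi.
case: k {T' L back} => [[|[|[|kk]]] hk3] //=; rewrite ?eqxx ?e1 ?e2 ?e3 /=.
- case/andP => hl _; rewrite hl hi' /=.
  apply/negP => /andP[hr /eqP E].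
  by have := child_neq v hi hr (or_intror erefl); rewrite E eqxx.
- case/andP => hr _; rewrite hr hi' /= ?andbT.
  have e4 : (i.*2 == i.*2.+1) = false by apply/negbTE; lia.
  rewrite e4; apply/negP => /andP[hl /eqP E].
  by have := child_neq v hi hl (or_introl erefl); rewrite E eqxx.
- by case/and3P => hl hr _; rewrite hl hi' eqxx.
Qed.

End TreeFacts.


Section Unif.
Variables (d B : nat) (R : realType).
Local Notation tree := (tree d B).

Lemma U_ge0 (I : finType) (T : tree) (A : {set I}) (K : I -> tree -> R) T' :
  (forall a, a \in A -> 0 <= K a T') -> 0 <= unifK T A K T'.
Proof.
move=> h; rewrite /unifK; case: eqP => _; first by rewrite ler0n.
by rewrite mulr_ge0 ?invr_ge0 ?ler0n // sumr_ge0.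
Qed.

Lemma ind_sum (T : tree) : \sum_(T' : tree) ((T == T')%:R : R) = 1.
Proof.
rewrite (bigD1 T) //= eqxx big1 ?addr0 // => T' /negbTE.
by rewrite eq_sym => ->.
Qed.

Lemma ind_sum' (T : tree) : \sum_(T' : tree) ((T' == T)%:R : R) = 1.
Proof. by under eq_bigr do rewrite eq_sym; exact: ind_sum. Qed.

Lemma U_sum (I : finType) (T : tree) (A : {set I}) (K : I -> tree -> R) :
  (forall a, a \in A -> \sum_T' K a T' = 1) -> \sum_T' unifK T A K T' = 1.
Proof.
move=> h; rewrite /unifK; case: eqP => A0; first exact: ind_sum'.
rewrite -big_distrr /= exchange_big /= (eq_bigr (fun _ => 1)) //.
rewrite sumr_const mulVf // pnatr_eq0; exact/eqP.
Qed.

Lemma U_zero (I : finType) (T : tree) (A : {set I}) (K : I -> tree -> R) T' :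
  T' != T -> (forall a, a \in A -> K a T' = 0) -> unifK T A K T' = 0.
Proof.
move=> ne h; rewrite /unifK (negbTE ne); case: eqP => // _.
by rewrite big1 ?mulr0.
Qed.

Lemma U_pos (I : finType) (T : tree) (A : {set I}) (K : I -> tree -> R) T' :
  0 < unifK T A K T' -> T' = T \/ exists2 a, a \in A & 0 < K a T'.
Proof.
rewrite /unifK; case: eqP => _.
  by case: eqP => [->|_]; [left|rewrite ltxx].
move=> h; right; have [//|nh] := pselect (exists2 a, a \in A & 0 < K a T').
exfalso; move: h; apply/negP; rewrite -leNgt.
rewrite mulr_ge0_le0 ?invr_ge0 ?ler0n // sumr_le0 // => a aA.
by rewrite leNgt; apply/negP => Ka; apply: nh; exists a.
Qed.

Lemma U_lb (I : finType) (T : tree) (A : {set I}) (K : I -> tree -> R) T' a :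
  a \in A -> (forall b, b \in A -> 0 <= K b T') -> 0 < K a T' -> 0 < unifK T A K T'.
Proof.
move=> aA h Ka; rewrite /unifK; case: eqP => [/eqP|A0].
  by rewrite cards_eq0 => /eqP A0; rewrite A0 inE in aA.
have c0 : (0 < #|A|)%N by rewrite lt0n; exact/eqP.
rewrite mulr_gt0 // ?invr_gt0 ?ltr0n //.
by rewrite (bigD1 a) //= ltr_pwDl // sumr_ge0 // => b /andP[/h].
Qed.

End Unif.


Section Props.
Variables (d B : nat) (R : realType).
Local Notation tree := (tree d B).

Lemma ind_ge0 (a b : tree) : 0 <= ((a == b)%:R : R).
Proof. by rewrite ler0n. Qed.

Lemma ind_pos (a b : tree) : 0 < ((a == b)%:R : R) -> a = b.
Proof. by case: eqP => // _; rewrite ltxx. Qed.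

Lemma ind_1 (a : tree) : 0 < ((a == a)%:R : R).
Proof. by rewrite eqxx ltr01. Qed.

Lemma growQ_ge0 (T T' : tree) : 0 <= growQ R T T'.
Proof. by apply: U_ge0 => i _; apply: U_ge0 => rho _; exact: ind_ge0. Qed.

Lemma growQ_sum (T : tree) : \sum_T' growQ R T T' = 1.
Proof. by apply: U_sum => i _; apply: U_sum => rho _; exact: ind_sum. Qed.

Lemma growQ_zero (T T' : tree) : valid_tree T -> ~~ valid_tree T' -> growQ R T T' = 0.
Proof.
move=> v nv; have ne : T' != T by apply: contraNneq nv => ->.
apply: U_zero => // i _; apply: U_zero => // rho; rewrite inE => vr.
by case: eqP vr nv => // -> ->.
Qed.

Lemma growQ_pos (T T' : tree) : 0 < growQ R T T' -> T' = T \/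
  exists i rho, [/\ i \in grow_nodes T, rho \in grow_rules T i & T' = upd T i (Some rho)].
Proof.
case/U_pos => [->|[i iG]]; first by left.
case/U_pos => [->|[rho rG /ind_pos <-]]; first by left.
by right; exists i, rho.
Qed.

Lemma growQ_lb (T : tree) i rho : i \in grow_nodes T -> rho \in grow_rules T i ->
  0 < growQ R T (upd T i (Some rho)).
Proof.
move=> iG rG; rewrite /growQ; apply: (U_lb _ iG) => [j _|]; first by apply: U_ge0 => *; exact: ind_ge0.
by apply: (U_lb _ rG) => [*|]; [exact: ind_ge0|exact: ind_1].
Qed.

Lemma pruneQ_ge0 (T T' : tree) : 0 <= pruneQ R T T'.
Proof. by apply: U_ge0 => i _; exact: ind_ge0. Qed.

Lemma pruneQ_sum (T : tree) : \sum_T' pruneQ R T T' = 1.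
Proof. by apply: U_sum => i _; exact: ind_sum. Qed.

Lemma pruneQ_zero (T T' : tree) : valid_tree T -> ~~ valid_tree T' -> pruneQ R T T' = 0.
Proof.
move=> v nv; have ne : T' != T by apply: contraNneq nv => ->.
apply: U_zero => // i iP; have := prune_valid v iP.
by case: eqP nv => // -> /negbTE ->.
Qed.

Lemma pruneQ_pos (T T' : tree) : 0 < pruneQ R T T' -> T' = T \/
  exists2 i, i \in prune_nodes T & T' = upd T i None.
Proof.
case/U_pos => [->|[i iP /ind_pos <-]]; first by left.
by right; exists i.
Qed.

Lemma pruneQ_lb (T : tree) i : i \in prune_nodes T -> 0 < pruneQ R T (upd T i None).
Proof.
by move=> iP; rewrite /pruneQ /swapQ; apply: (U_lb _ iP) => [*|]; [exact: ind_ge0|exact: ind_1].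
Qed.

Lemma changeQ_ge0 (T T' : tree) : 0 <= changeQ R T T'.
Proof. by apply: U_ge0 => i _; apply: U_ge0 => rho _; exact: ind_ge0. Qed.

Lemma changeQ_sum (T : tree) : \sum_T' changeQ R T T' = 1.
Proof. by apply: U_sum => i _; apply: U_sum => rho _; exact: ind_sum. Qed.

Lemma changeQ_zero (T T' : tree) : valid_tree T -> ~~ valid_tree T' -> changeQ R T T' = 0.
Proof.
move=> v nv; have ne : T' != T by apply: contraNneq nv => ->.
apply: U_zero => // i _; apply: U_zero => // rho; rewrite inE => /andP[_ vr].
by case: eqP vr nv => // -> ->.
Qed.

Lemma changeQ_pos (T T' : tree) : 0 < changeQ R T T' -> T' = T \/
  exists i rho, [/\ i \in change_nodes T, rho \in change_rules T i & T' = upd T i (Some rho)].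
Proof.
case/U_pos => [->|[i iG]]; first by left.
case/U_pos => [->|[rho rG /ind_pos <-]]; first by left.
by right; exists i, rho.
Qed.

Lemma changeQ_lb (T : tree) i rho : i \in change_nodes T -> rho \in change_rules T i ->
  0 < changeQ R T (upd T i (Some rho)).
Proof.
move=> iG rG; rewrite /growQ /changeQ; apply: (U_lb _ iG) => [j _|]; first by apply: U_ge0 => *; exact: ind_ge0.
by apply: (U_lb _ rG) => [*|]; [exact: ind_ge0|exact: ind_1].
Qed.

Lemma swapQ_ge0 (T T' : tree) : 0 <= swapQ R T T'.
Proof. by apply: U_ge0 => i _; exact: ind_ge0. Qed.

Lemma swapQ_sum (T : tree) : \sum_T' swapQ R T T' = 1.
Proof. by apply: U_sum => i _; exact: ind_sum. Qed.

Lemma swapQ_zero (T T' : tree) : valid_tree T -> ~~ valid_tree T' -> swapQ R T T' = 0.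
Proof.
move=> v nv; have ne : T' != T by apply: contraNneq nv => ->.
apply: U_zero => // -[i k]; rewrite inE /swap_ok /= => /and3P[_ vr _].
by case: eqP vr nv => // -> ->.
Qed.

Lemma swapQ_pos (T T' : tree) : 0 < swapQ R T T' -> T' = T \/
  exists i k, (i, k) \in swap_opts T /\ T' = swapres T i k.
Proof.
case/U_pos => [->|[[i k] iP /ind_pos <-]]; first by left.
by right; exists i, k.
Qed.

Lemma swapQ_lb (T : tree) i k : (i, k) \in swap_opts T -> 0 < swapQ R T (swapres T i k).
Proof.
by move=> iP; rewrite /pruneQ /swapQ; apply: (U_lb _ iP) => [*|]; [exact: ind_ge0|exact: ind_1].
Qed.

End Props.


Lemma prod_pos (R : realType) (a b : R) : 0 <= a -> 0 <= b -> 0 < a * b -> 0 < a /\ 0 < b.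
Proof.
move=> a0 b0 ab; split; rewrite lt_def ?a0 ?b0 andbT; apply/eqP => e; move: ab;
  by rewrite e ?mul0r ?mulr0 ltxx.
Qed.

Lemma sum_pos_ex (R : realType) (I : finType) (P : pred I) (f : I -> R) :
  0 < \sum_(i | P i) f i -> exists2 i, P i & 0 < f i.
Proof.
move=> h; have [//|nh] := pselect (exists2 i, P i & 0 < f i).
exfalso; move: h; apply/negP; rewrite -leNgt sumr_le0 // => i Pi.
by rewrite leNgt; apply/negP => fi; apply: nh; exists i.
Qed.

Section TQ.
Variables (d B : nat) (R : realType) (pi0 pig pip pic pis : R).
Hypotheses (hp0 : 0 < pi0) (hpg : 0 < pig) (hpp : 0 < pip) (hpc : 0 <= pic) (hps : 0 <= pis).
Hypothesis hsum : pi0 + pig + pip + pic + pis = 1.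
Local Notation tree := (tree d B).
Local Notation TQ := (treeQ pi0 pig pip pic pis).

Lemma TQ_ge0 (T T' : tree) : 0 <= TQ T T'.
Proof.
have := growQ_ge0 R T T'; have := pruneQ_ge0 R T T'.
have := changeQ_ge0 R T T'; have := swapQ_ge0 R T T'.
have := ler0n R (T' == T).
rewrite /treeQ => *; repeat apply: addr_ge0; apply: mulr_ge0 => //; exact: ltW.
Qed.

Lemma TQ_sum (T : tree) : \sum_T' TQ T T' = 1.
Proof.
rewrite /treeQ !big_split /= -!big_distrr /= ind_sum' growQ_sum pruneQ_sum.
by rewrite changeQ_sum swapQ_sum !mulr1.
Qed.

Lemma TQ_zero (T T' : tree) : valid_tree T -> ~~ valid_tree T' -> TQ T T' = 0.
Proof.
move=> v nv; have ne : T' != T by apply: contraNneq nv => ->.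
rewrite /treeQ (negbTE ne) growQ_zero // pruneQ_zero // changeQ_zero //.
by rewrite swapQ_zero // !mulr0 !addr0.
Qed.

Lemma TQ_diag (T : tree) : pi0 <= TQ T T.
Proof.
have := TQ_ge0 T T; rewrite /treeQ eqxx mulr1.
have := growQ_ge0 R T T; have := pruneQ_ge0 R T T.
have := changeQ_ge0 R T T; have := swapQ_ge0 R T T => h1 h2 h3 h4 _.
rewrite -!addrA lerDl; repeat apply: addr_ge0; apply: mulr_ge0 => //; exact: ltW.
Qed.

Lemma TQ_gt0 (T T' : tree) :
  T' = T \/ [\/ 0 < growQ R T T', 0 < pruneQ R T T', 0 < pic * changeQ R T T'
    | 0 < pis * swapQ R T T'] -> 0 < TQ T T'.
Proof.
have := growQ_ge0 R T T'; have := pruneQ_ge0 R T T'.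
have := changeQ_ge0 R T T'; have := swapQ_ge0 R T T'.
have := ler0n R (T' == T) => h0 h1 h2 h3 h4.
have t1 : 0 <= pig * growQ R T T' by rewrite mulr_ge0 // ltW.
have t2 : 0 <= pip * pruneQ R T T' by rewrite mulr_ge0 // ltW.
have t3 : 0 <= pic * changeQ R T T' by rewrite mulr_ge0.
have t4 : 0 <= pis * swapQ R T T' by rewrite mulr_ge0.
have t0 : 0 <= pi0 * (T' == T)%:R by rewrite mulr_ge0 // ltW.
rewrite /treeQ; case=> [E|[g|p|c|s]].
- rewrite E in t1 t2 t3 t4 *; rewrite eqxx mulr1; apply: lt_le_trans hp0 _.
  by rewrite -!addrA lerDl; repeat apply: addr_ge0.
- have : 0 < pig * growQ R T T' by rewrite mulr_gt0. lra.
- have : 0 < pip * pruneQ R T T' by rewrite mulr_gt0. lra.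
- lra.
- lra.
Qed.

Lemma TQ_ext (T T' : tree) : 0 < TQ T T' ->
  T' = T \/ [\/ 0 < growQ R T T', 0 < pruneQ R T T', 0 < pic * changeQ R T T'
    | 0 < pis * swapQ R T T'].
Proof.
move=> h; case: (eqVneq T' T) => [->|ne]; first by left.
have [g|g] := boolP (0 < growQ R T T'); first by right; constructor 1.
have [p|p] := boolP (0 < pruneQ R T T'); first by right; constructor 2.
have [c|c] := boolP (0 < pic * changeQ R T T').
  by right; constructor 3.
have [s|s] := boolP (0 < pis * swapQ R T T').
  by right; constructor 4.
exfalso; move: h; rewrite /treeQ (negbTE ne) mulr0 add0r.
move: g p c s; rewrite -!leNgt => g p c s.
have g' : pig * growQ R T T' <= 0 by rewrite mulr_ge0_le0 // ltW.
have p' : pip * pruneQ R T T' <= 0 by rewrite mulr_ge0_le0 // ltW.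
apply/negP; rewrite -leNgt; apply: le_trans (lerD (lerD (lerD g' p') c) s) _.
by rewrite !addr0.
Qed.

Lemma TQ_sym (T T' : tree) : valid_tree T -> valid_tree T' -> 0 < TQ T T' -> 0 < TQ T' T.
Proof.
move=> v v' /TQ_ext [->|[g|p|c|s]].
- exact: lt_le_trans hp0 (TQ_diag _).
- case/growQ_pos: g => [->|[i [rho [iG rG E]]]]; first exact: lt_le_trans hp0 (TQ_diag _).
  have [iP E2] := grow_back v iG rG; rewrite -E in iP E2.
  have := pruneQ_lb R iP; rewrite E2 => h.
  by apply: TQ_gt0; right; constructor 2.
- case/pruneQ_pos: p => [->|[i iP E]]; first exact: lt_le_trans hp0 (TQ_diag _).
  have [rho [iG rG E2]] := prune_back v iP; rewrite -E in iG rG E2.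
  have := growQ_lb R iG rG; rewrite E2 => h.
  by apply: TQ_gt0; right; constructor 1.
- have [pc c'] := prod_pos hpc (changeQ_ge0 _ _ _) c.
  case/changeQ_pos: c' => [->|[i [rho [iG rG E]]]]; first exact: lt_le_trans hp0 (TQ_diag _).
  have [a [iG' aG E2]] := change_back v iG rG; rewrite -E in iG' aG E2.
  have := changeQ_lb R iG' aG; rewrite E2 => h.
  by apply: TQ_gt0; right; constructor 3; rewrite mulr_gt0.
- have [ps s'] := prod_pos hps (swapQ_ge0 _ _ _) s.
  case/swapQ_pos: s' => [->|[i [k [iP E]]]]; first exact: lt_le_trans hp0 (TQ_diag _).
  have [iP' E2] := swap_back v iP; rewrite -E in iP' E2.
  have := swapQ_lb R iP'; rewrite E2 => h.
  by apply: TQ_gt0; right; constructor 4; rewrite mulr_gt0.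
Qed.

End TQ.


Section EQ.
Variables (d B m : nat) (R : realType) (pi0 pig pip pic pis : R).
Hypotheses (hp0 : 0 < pi0) (hpg : 0 < pig) (hpp : 0 < pip) (hpc : 0 <= pic) (hps : 0 <= pis).
Hypothesis hsum : pi0 + pig + pip + pic + pis = 1.
Hypothesis m0 : (0 < m)%N.
Local Notation tree := (tree d B).
Local Notation ens := (ens d B m).
Local Notation TQ := (treeQ pi0 pig pip pic pis).
Local Notation EQ := (@ensQ d B R m pi0 pig pip pic pis).
Local Notation Om := (OmegaTSE d B m).

Definition agree (j : 'I_m) (E E' : ens) := [forall k : 'I_m, (k != j) ==> (E k == E' k)].

Lemma EQ_ge0 (E E' : ens) : 0 <= EQ E E'.
Proof.
rewrite /ensQ mulr_ge0 ?invr_ge0 ?ler0n // sumr_ge0 // => j _.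
by rewrite mulr_ge0 ?ler0n // TQ_ge0.
Qed.

Lemma EQ_zero (E E' : ens) : E \in Om -> E' \notin Om -> EQ E E' = 0.
Proof.
rewrite !inE => /forallP vE /forallPn [k nk].
rewrite /ensQ big1 ?mulr0 // => j _.
case: (eqVneq k j) => [<-|kj]; first by rewrite TQ_zero // mul0r.
case: forallP => [h|_]; last by rewrite mulr0.
have /eqP ek := implyP (h k) kj; move: nk; by rewrite -ek vE.
Qed.

Definition setj (E : ens) (j : 'I_m) (T : tree) : ens :=
  [ffun k => if k == j then T else E k].

Lemma setj_eq (E : ens) j T (E' : ens) :
  (setj E j T == E') = agree j E E' && (T == E' j).
Proof.
apply/eqP/andP => [<-|[/forallP h /eqP ->]].
  split; last by rewrite ffunE eqxx.
  apply/forallP => k; apply/implyP => kj; by rewrite ffunE (negbTE kj).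
apply/ffunP => k; rewrite ffunE; case: eqP => [->//|/eqP kj].
by apply/eqP; exact: (implyP (h k) kj).
Qed.

Lemma sum_agree j (E : ens) (F : tree -> R) :
  \sum_(E' : ens) F (E' j) * (agree j E E')%:R = \sum_(T' : tree) F T'.
Proof.
have e1 T' : F T' = \sum_(E' : ens) F T' * (setj E j T' == E')%:R.
  rewrite (bigD1 (setj E j T')) //= eqxx mulr1 big1 ?addr0 // => E' ne.
  by rewrite eq_sym (negbTE ne) mulr0.
rewrite [RHS](eq_bigr _ (fun T' _ => e1 T')) exchange_big /=.
apply: eq_bigr => E' _; under eq_bigr do rewrite setj_eq.
case: (agree j E E') => /=; last by rewrite mulr0 big1 // => T' _; rewrite mulr0.
rewrite mulr1 (bigD1 (E' j)) //= eqxx mulr1 big1 ?addr0 // => T' ne.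
by rewrite (negbTE ne) mulr0.
Qed.

Lemma EQ_sum (E : ens) : E \in Om -> \sum_(E' in Om) EQ E E' = 1.
Proof.
move=> EO.
have -> : \sum_(E' in Om) EQ E E' = \sum_(E' : ens) EQ E E'.
  rewrite big_mkcond /=; apply: eq_bigr => E' _.
  by case: ifP => // /negbT h; rewrite EQ_zero.
rewrite /ensQ -big_distrr /= exchange_big /=.
under eq_bigr => j _ do rewrite (sum_agree j E (fun T' => TQ (E j) T')) TQ_sum //.
rewrite sumr_const card_ord mulVf // pnatr_eq0 -lt0n //.
Qed.

Lemma EQ_diag (E : ens) : pi0 <= EQ E E.
Proof.
rewrite /ensQ; apply: le_trans (_ : m%:R^-1 * \sum_(j < m) pi0 <= _).
  by rewrite sumr_const card_ord -[pi0 *+ m]mulr_natl mulrA mulVf ?mul1r // pnatr_eq0 -lt0n.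
rewrite ler_wpM2l ?invr_ge0 ?ler0n // ler_sum // => j _.
have -> : [forall k : 'I_m, (k != j) ==> (E k == E k)].
  by apply/forallP => k; rewrite eqxx implybT.
by rewrite mulr1 TQ_diag.
Qed.

Lemma EQ_sym (E E' : ens) : E \in Om -> E' \in Om -> 0 < EQ E E' -> 0 < EQ E' E.
Proof.
rewrite !inE => /forallP vE /forallP vE' h.
move: h; rewrite /ensQ => h.
have hm : 0 <= m%:R^-1 :> R by rewrite invr_ge0 ler0n.
have hT (F G : ens) k : 0 <= TQ (F k) (G k) by exact: TQ_ge0.
have hs (F G : ens) : 0 <= \sum_(j < m) TQ (F j) (G j) *
    [forall k : 'I_m, (k != j) ==> (F k == G k)]%:R.
  by apply: sumr_ge0 => j _; rewrite mulr_ge0 ?ler0n.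
have [mp sp] := prod_pos hm (hs E E') h.
have [j _ hj] := sum_pos_ex sp.
have [tq ag] := prod_pos (hT E E' j) (ler0n _ _) hj.
have tq' := TQ_sym hp0 hpg hpp hpc hps (vE j) (vE' j) tq.
have ag' : [forall k : 'I_m, (k != j) ==> (E' k == E k)].
  move: ag; case: forallP => [h' _|]; last by rewrite ltxx.
  by apply/forallP => k; apply/implyP => kj; rewrite eq_sym (implyP (h' k) kj).
rewrite mulr_gt0 // (bigD1 j) //= ag' mulr1.
apply: lt_le_trans tq' _; rewrite lerDl sumr_ge0 // => k _.
by rewrite mulr_ge0 ?ler0n.
Qed.


End EQ.


Section KP.
Variables (R : realType) (S : finType) (Om : {set S}) (K : S -> S -> R) (c : R).
Hypothesis K0 : forall x y, 0 <= K x y.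
Hypothesis Ks : forall x, x \in Om -> \sum_(y in Om) K x y = 1.
Hypothesis Kd : forall x, x \in Om -> c <= K x x.
Hypothesis c0 : 0 < c.
Hypothesis Ksym : forall x y, x \in Om -> y \in Om -> 0 < K x y -> 0 < K y x.

Lemma kp_ge0 t x y : 0 <= kpow Om K t x y.
Proof.
elim: t x y => [|t IH] x y; first by rewrite /= /kid ler0n.
by rewrite kpowS sumr_ge0 // => z _; rewrite mulr_ge0.
Qed.

Lemma kp_sum t x : x \in Om -> \sum_(y in Om) kpow Om K t x y = 1.
Proof.
elim: t x => [|t IH] x xO; first exact: sum_kid.
under eq_bigr do rewrite kpowS.
rewrite exchange_big /= -(Ks xO); apply: eq_bigr => z zO.
by rewrite -big_distrr /= IH // mulr1.
Qed.

Lemma kp_diag t x : x \in Om -> 0 < kpow Om K t x x.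
Proof.
move=> xO; elim: t => [|t IH]; first by rewrite /= /kid eqxx ltr01.
rewrite kpowS (bigD1 x) //=; apply: lt_le_trans (_ : 0 < K x x * kpow Om K t x x) _.
  by rewrite mulr_gt0 // (lt_le_trans c0 (Kd xO)).
rewrite lerDl sumr_ge0 // => z _; by rewrite mulr_ge0 ?kp_ge0.
Qed.

Lemma kp_walk k x y : kwalk Om K k x y -> x \in Om ->
  forall t, (k <= t)%N -> 0 < kpow Om K t x y.
Proof.
elim: k x => [|k IH] x /=.
  by move=> -> yO t _; exact: kp_diag.
move=> [z [zO [e w]]] xO [|t] // kt.
have Kxz : 0 < K x z by case: e => // /Ksym; apply.
rewrite kpowS (bigD1 z) //=.
apply: lt_le_trans (_ : 0 < K x z * kpow Om K t z y) _.
  by rewrite mulr_gt0 // IH.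
rewrite lerDl sumr_ge0 // => u _; by rewrite mulr_ge0 ?kp_ge0.
Qed.

Lemma kp_pos r : diam_le Om K r -> forall x y, x \in Om -> y \in Om ->
  0 < kpow Om K r x y.
Proof.
move=> hd x y xO yO; have [k kr w] := hd x y xO yO.
exact: kp_walk w xO r kr.
Qed.

End KP.

Lemma unif_lb (R : realType) (S : finType) (Om : {set S}) (f : S -> S -> R) :
  (forall x y, x \in Om -> y \in Om -> 0 < f x y) ->
  exists2 q : R, 0 < q & forall x y, x \in Om -> y \in Om -> q <= f x y.
Proof.
move=> fp.
pose s := 1 + \sum_(x in Om) \sum_(y in Om) (f x y)^-1.
have sg : forall x y, x \in Om -> y \in Om -> (f x y)^-1 <= s.
  move=> x y xO yO; rewrite /s (bigD1 x) //= (bigD1 y yO) //=.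
  have h1 : 0 <= \sum_(i in Om | i != y) (f x i)^-1.
    by apply: sumr_ge0 => i /andP[iO _]; rewrite invr_ge0 ltW ?fp.
  have h2 : 0 <= \sum_(i in Om | i != x) \sum_(y0 in Om) (f i y0)^-1.
    apply: sumr_ge0 => i /andP[iO _]; apply: sumr_ge0 => j jO.
    by rewrite invr_ge0 ltW ?fp.
  lra.
have s0 : 0 < s.
  rewrite /s ltr_pwDl // sumr_ge0 // => x xO; rewrite sumr_ge0 // => y yO.
  by rewrite invr_ge0 ltW ?fp.
exists s^-1; first by rewrite invr_gt0.
move=> x y xO yO; rewrite -[f x y]invrK lef_pV2 ?posrE ?invr_gt0 ?fp //.
exact: sg.
Qed.


Section Det.
Variables (R : realType) (n : nat).

Lemma rv_sq_gt0 (v : 'rV[R]_n) : v != 0 -> 0 < (v *m v^T) 0 0.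
Proof.
move=> v0; have [k vk] : exists k, v 0 k != 0.
  apply/existsP; apply: contraR v0 => /existsPn h; apply/eqP/matrixP => i j.
  by rewrite (ord1 i) mxE; apply/eqP; have := h j; rewrite negbK.
rewrite mxE (bigD1 k) //= mxE ltr_pwDl //.
  by rewrite -expr2 exprn_even_gt0 //= ?vk.
by apply: sumr_ge0 => i _; rewrite mxE -expr2 sqr_ge0.
Qed.

Lemma det_pd (c e : R) (M : 'M[R]_n) : 0 < c -> 0 <= e ->
  (forall v : 'rV[R]_n, 0 <= (v *m M *m v^T) 0 0) ->
  0 < \det (c *: 1%:M + e *: M).
Proof.
move=> c0 e0 psd.
have nz t : 0 <= t -> \det (c *: 1%:M + t *: (e *: M)) != 0.
  move=> t0; apply/det0P => -[v v0 /(congr1 (fun A => (A *m v^T) 0 0))].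
  rewrite mulmxDr -!scalemxAr mulmx1 mulmxDl -!scalemxAl mul0mx.
  move: (rv_sq_gt0 v0) (psd v); rewrite !mxE => h1 h2.
  move=> /eqP; apply/negP; rewrite gt_eqF // ltr_pwDl //.
    by rewrite pmulr_rgt0.
  by rewrite !mulr_ge0.
pose Mp : 'M[{poly R}]_n := \matrix_(i, j) (((c *: 1%:M) i j)%:P + 'X * ((e *: M) i j)%:P).
have ev t : (\det Mp).[t] = \det (c *: 1%:M + t *: (e *: M)).
  rewrite -horner_evalE -det_map_mx; congr (\det _); apply/matrixP => i j.
  by rewrite !mxE /= horner_evalE hornerD hornerM hornerX !hornerC.
have p0 : 0 < (\det Mp).[0] by rewrite ev scale0r addr0 scalemx1 det_scalar exprn_gt0.
have := ev 1; rewrite scale1r => <-.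
rewrite ltNge; apply/negP => p1.
have [x /andP[x0 x1] /rootP rx] : exists2 x, 0 <= x <= 1 & root (- \det Mp) x.
  apply: poly_ivt => //; rewrite !hornerN oppr_le0 ltW //= oppr_ge0 p1.
  by [].
by move: rx; rewrite hornerN ev => /eqP; rewrite oppr_eq0; apply/negP; exact: nz.
Qed.

End Det.

Section Psi.
Variables (R : realType) (d B m n : nat).

Lemma natr_andb (a b : bool) : ((a && b)%:R : R) = a%:R * b%:R.
Proof. by case: a; case: b; rewrite /= ?mul0r ?mul1r ?mulr0. Qed.

Lemma psi_psd (E : ens d B m) (xd : 'I_n -> covpt d B) (v : 'rV[R]_n) :
  0 <= (v *m PsiPsiT R E xd *m v^T) 0 0.
Proof.
pose a j l i : R := (cell (E j) l (xd i))%:R.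
have -> : (v *m PsiPsiT R E xd *m v^T) 0 0 =
   \sum_(j < m) \sum_(l : pos d B | is_leaf (E j) l)
      (\sum_(i < n) v 0 i * a j l i) ^+ 2.
  rewrite mxE.
  transitivity (\sum_(k < n) \sum_(i < n) \sum_(j < m) \sum_(l : pos d B | is_leaf (E j) l)
      (v 0 i * a j l i) * (v 0 k * a j l k)).
    apply: eq_bigr => k _; rewrite !mxE big_distrl /=; apply: eq_bigr => i _.
    rewrite !mxE big_distrr big_distrl /=; apply: eq_bigr => j _.
    rewrite big_distrr big_distrl /=; apply: eq_bigr => l _.
    by rewrite natr_andb /a; ring.
  rewrite exchange_big /=.
  under eq_bigr do rewrite exchange_big /=.
  rewrite exchange_big /=; apply: eq_bigr => j _.
  under eq_bigr do rewrite exchange_big /=.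
  rewrite exchange_big /=; apply: eq_bigr => l _.
  rewrite expr2 big_distrl /=; apply: eq_bigr => i _.
  by rewrite big_distrr.
by apply: sumr_ge0 => j _; apply: sumr_ge0 => l _; exact: sqr_ge0.
Qed.

Lemma marglik_gt0 (sigma2 lambda : R) (E : ens d B m) (xd : 'I_n -> covpt d B) yd :
  0 < sigma2 -> 0 < lambda -> 0 < marglik sigma2 lambda E xd yd.
Proof.
move=> s0 l0; rewrite /marglik.
have dp : 0 < \det (marg_cov sigma2 lambda E xd).
  by apply: det_pd => //; [rewrite divr_ge0 // ltW|exact: psi_psd].
rewrite !mulr_gt0 ?expR_gt0 // invr_gt0 ?sqrtr_gt0 //.
by rewrite exprn_gt0 // sqrtr_gt0 mulr_gt0 // pi_gt0.
Qed.

End Psi.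


Lemma geom_small (R : realType) (b e : R) : 0 < b -> b <= 1 -> 0 < e ->
  exists t : nat, (1 - b) ^+ t <= e.
Proof.
move=> b0 b1 e0.
have key t : (1 - b) ^+ t * (1 + t%:R * b) <= 1.
  elim: t => [|t IH]; first by rewrite expr0 mul0r addr0 mul1r.
  have y0 : 0 <= (1 - b) ^+ t by rewrite exprn_ge0 // subr_ge0.
  have T0 : 0 <= t%:R :> R by rewrite ler0n.
  have h : 0 <= (1 - b) ^+ t * (b ^+ 2 + t%:R * b ^+ 2).
    by rewrite mulr_ge0 // addr_ge0 ?sqr_ge0 // mulr_ge0 ?sqr_ge0.
  rewrite exprS -addn1 natrD.
  move: ((1 - b) ^+ t) y0 IH h => y y0 IH h.
  move: (t%:R : R) T0 IH h => T T0 IH h.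
  have -> : (1 - b) * y * (1 + (T + 1%:R) * b) =
            y * (1 + T * b) - y * (b ^+ 2 + T * b ^+ 2) by ring.
  lra.
have be0 : 0 < b * e by rewrite mulr_gt0.
pose t := (Num.Def.trunc (b * e)^-1).+1.
exists t.
have ht : 1 < b * e * t%:R.
  have h := truncnS_gt ((b * e)^-1).
  by rewrite -(ltr_pM2l be0) mulfV ?gt_eqF // in h.
have k := key t.
have y0 : 0 <= (1 - b) ^+ t by rewrite exprn_ge0 // subr_ge0.
have T0 : 0 <= t%:R :> R by rewrite ler0n.
move: ((1 - b) ^+ t) k y0 => y k y0.
move: (t%:R : R) k T0 ht => T k T0 ht.
nra.
Qed.

Unset Implicit Arguments. Set Strict Implicit.
Local Open Scope classical_set_scope.

Theorem theorem7p2
  (R : realType) (d B : nat)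
  (nu : covpt d B -> R) (fstar : covpt d B -> R) (mu : probability R R)
  (dW : measure_display) (W : measurableType dW) (P : probability W R)
  (xs : nat -> W -> covpt d B) (es : nat -> W -> R)
  (m : nat) (sigma2 lambda : R) (pi0 pig pip pic pis : R)
  (prior : ens d B m -> R) (r : nat) (eps : R) :
  full_support_prob nu ->
  centered_subgaussian mu ->
  iid_design_noise P nu mu xs es ->
  is_additive fstar ->
  (0 < m)%N -> 0 < sigma2 -> 0 < lambda ->
  0 < pi0 -> 0 < pig -> 0 < pip -> 0 <= pic -> 0 <= pis ->
  pi0 + pig + pip + pic + pis = 1 ->
  (forall E, E \in OmegaTSE d B m -> 0 < prior E) ->
  \sum_(E in OmegaTSE d B m) prior E = 1 ->
  diam_le (OmegaTSE d B m) (ensQ pi0 pig pip pic pis) r ->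
  0 < eps ->
  forall delta : R, 0 < delta < 1 ->
  exists (N : nat) (C : R), 0 < C /\
    exists2 s : R, s < delta &
    forall n : nat, (N < n)%N ->
      exists A : set W, [/\ measurable A,
        [set w | ~ tmix_le (OmegaTSE d B m)
                   (bartplus_lazy pi0 pig pip pic pis sigma2 lambda 1 prior r
                      (fun i : 'I_n => xs i w)
                      (fun i : 'I_n => fstar (xs i w) + es i w))
                   (bartplus_posterior sigma2 lambda prior
                      (fun i : 'I_n => xs i w)
                      (fun i : 'I_n => fstar (xs i w) + es i w))
                   eps C] `<=` A
        & (P A <= s%:E)%E].
Proof.
move=> _ _ _ _ m0 s0 l0 hp0 hpg hpp hpc hps hsum hprior _ hdiam e0 delta /andP[d0 _].
pose Om := OmegaTSE d B m.
pose Q := @ensQ d B R m pi0 pig pip pic pis.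
have K0 : forall x y, 0 <= Q x y by move=> x y; exact: EQ_ge0.
have Ks : forall x, x \in Om -> \sum_(y in Om) Q x y = 1.
  by move=> x xO; exact: EQ_sum.
have Kd : forall x, x \in Om -> pi0 <= Q x x by move=> x _; exact: EQ_diag.
have Ksym : forall x y, x \in Om -> y \in Om -> 0 < Q x y -> 0 < Q y x.
  by move=> x y xO yO; exact: EQ_sym.
have Qrpos : forall x y, x \in Om -> y \in Om -> 0 < kpow Om Q r x y.
  by move=> x y xO yO; exact: (kp_pos K0 Kd hp0 Ksym hdiam).
have [q q0 qle] := unif_lb Qrpos.
pose q1 := Order.min q 1.
have q10 : 0 < q1 by rewrite lt_min q0 ltr01.
have q11 : q1 <= 1 by rewrite ge_min lexx orbT.
have q1le : forall x y, x \in Om -> y \in Om -> q1 <= kpow Om Q r x y.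
  by move=> x y xO yO; rewrite ge_min qle.
have [t ht] : exists t : nat, (1 - q1 / 2) ^+ t <= eps.
  apply: geom_small => //; first by rewrite divr_gt0.
  rewrite ler_pdivrMr // mul1r (le_trans q11) //.
  by rewrite -[1]/(1%:R) ler_nat.
exists 0%N, (t%:R + 1); split.
  by rewrite ltr_pwDr // ler0n.
exists 0 => // n _; exists set0; split => //; last by rewrite measure0.
move=> w /= H; apply: H; exists t; split; first by rewrite lerDl.
move=> x xO.
apply: le_trans ht.
apply: (@Kl_tv R (ens d B m) Om (kpow Om Q r) prior
  (fun E => marglik sigma2 lambda E (fun i : 'I_n => xs i w)
                      (fun i : 'I_n => fstar (xs i w) + es i w)) q1) => //.
- by move=> a b _ _; exact: kp_ge0.
- by move=> a aO; exact: kp_sum.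
- by move=> a _; exact: marglik_gt0.
Qed.
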